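(* For any $\beta\in[0,\infty)$ there exists a weight sequence $\boldsymbol{M}^\beta$ such that: (i) $\boldsymbol{M}^\beta$ satisfies $\operatorname{(sm)}$; (ii) $\boldsymbol{M}^\beta$ does not satisfy $\operatorname{(dc)}$ (and hence not $\operatorname{(mg)}$ either); (iii) $\gamma(\boldsymbol{M}^\beta)=\beta$.
   Context: A weight sequence is a sequence $\boldsymbol{M}=(M_p)_{p\in\mathbb{N}_0}$ of positive reals with $M_0=1$, $M_p^2\le M_{p-1}M_{p+1}$ ($p\ge1$) and $m_p=M_{p+1}/M_p\to\infty$. $\operatorname{(sm)}$: $\log(m_{p+1}/m_p)\le C_0H^{p+1}$ for all $p$, some $C_0>0$, $H>1$. $\operatorname{(dc)}$: $M_{p+1}\le C_0H^{p+1}M_p$ for all $p$, some $C_0>0$, $H>1$. $\operatorname{(mg)}$: $M_{p+q}\le C_0H^{p+q}M_pM_q$ for all $p,q$, some $C_0>0,H>1$. Almost increasing: $c_p\le ac_q$ for $q\ge p$, some $a>0$. $\gamma(\boldsymbol{M})=\sup\{\mu>0:(m_p/(p+1)^\mu)_p\text{ almost increasing}\}\in[0,\infty]$. *)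

(* Defs.v *)
From HB Require Import structures.
From mathcomp Require Import all_boot all_order all_algebra.
From mathcomp Require Import all_classical all_reals all_analysis.
Set Implicit Arguments. Unset Strict Implicit. Unset Printing Implicit Defensive.
Import Order.TTheory GRing.Theory Num.Theory.
Import numFieldNormedType.Exports.
Local Open Scope classical_set_scope.
Local Open Scope ring_scope.

Section WeightSeq.
Variable R : realType.

Definition quot (M : nat -> R) : nat -> R := fun p => M p.+1 / M p.

Definition weight_seq (M : nat -> R) : Prop :=
  [/\ M 0%N = 1,
      (forall p, 0 < M p),
      (forall p, (1 <= p)%N -> M p ^+ 2 <= M p.-1 * M p.+1) &
      (quot M @ \oo --> +oo)].

Definition cond_sm (M : nat -> R) : Prop :=
  exists C0 H : R, 0 < C0 /\ 1 < H /\
    forall p, ln (quot M p.+1 / quot M p) <= C0 * H ^+ p.+1.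

Definition cond_dc (M : nat -> R) : Prop :=
  exists C0 H : R, 0 < C0 /\ 1 < H /\
    forall p, M p.+1 <= C0 * H ^+ p.+1 * M p.

Definition cond_mg (M : nat -> R) : Prop :=
  exists C0 H : R, 0 < C0 /\ 1 < H /\
    forall p q, M (p + q)%N <= C0 * H ^+ (p + q) * M p * M q.

Definition almost_increasing (c : nat -> R) : Prop :=
  exists a : R, 0 < a /\ forall p q, (p <= q)%N -> c p <= a * c q.

Definition gamma_set (M : nat -> R) : set R :=
  [set mu : R | 0 < mu /\
     almost_increasing (fun p => quot M p / (p.+1%:R `^ mu))].

(* gamma(M) = sup of that set in [0, +oo] (sup of the empty set is 0) *)
Definition gamma (M : nat -> R) : \bar R :=
  ereal_sup ([set 0%E] `|` [set (mu%:E)%E | mu in gamma_set M]).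

End WeightSeq.

(* Main.v *)
Require Import Defs.
From HB Require Import structures.
From mathcomp Require Import all_boot all_order all_algebra.
From mathcomp Require Import all_classical all_reals all_analysis.
From mathcomp Require Import zify ring lra.
Import Order.TTheory GRing.Theory Num.Theory.
Set Implicit Arguments.
Local Open Scope ring_scope.

Definition kk (p : nat) : nat := trunc_log 2 (trunc_log 2 p).
Definition hh (p : nat) : nat := 2 ^ (2 ^ kk p).
Definition gg (p : nat) : nat := hh p * hh p.

Lemma gg_mono p q : (p <= q)%N -> (gg p <= gg q)%N.
Proof.
move=> pq; have hk : (kk p <= kk q)%N by rewrite /kk; do 2 apply: leq_trunc_log.
have hh' : (hh p <= hh q)%N by rewrite /hh leq_pexp2l // leq_pexp2l.
by rewrite /gg leq_mul.
Qed.

Lemma hh_le p : (hh p <= p + 2)%N.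
Proof.
rewrite /hh /kk.
case: (posnP (trunc_log 2 p)) => [->|tp].
  by rewrite trunc_log0 expn0 expn1 leq_addl.
have p0 : (0 < p)%N by case: p tp => //; rewrite trunc_log0.
apply: leq_trans (leq_addr 2 _).
apply: leq_trans (trunc_logP (isT : (1 < 2)%N) p0).
by rewrite leq_pexp2l // trunc_logP.
Qed.

Lemma gg_le p : (gg p <= (p + 2) * (p + 2))%N.
Proof. by rewrite /gg leq_mul // hh_le. Qed.

Lemma gg_gt p : (p < gg p)%N.
Proof.
rewrite /gg /hh -expnD addnn -mul2n -expnS.
apply: leq_trans (trunc_log_ltn p (isT : (1 < 2)%N)) _.
by rewrite leq_pexp2l // trunc_log_ltn.
Qed.

Lemma hh_pow k : hh (2 ^ (2 ^ k)) = (2 ^ (2 ^ k))%N.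
Proof. by rewrite /hh /kk !trunc_expnK. Qed.

Lemma hh_flat k : hh (2 ^ (2 ^ k + k)) = (2 ^ (2 ^ k))%N.
Proof.
rewrite /hh /kk trunc_expnK // (@trunc_log_eq 2 k) //.
by rewrite leq_addr /= expnS mul2n -addnn ltn_add2l ltn_expl.
Qed.

Lemma nat_poly p : ((p.+3) * (p.+3) <= 9 * 4 ^ p.+1)%N.
Proof.
elim: p => [//|p IH]. rewrite expnS.
apply: leq_trans (_ : (4 * (p.+3 * p.+3) <= _)%N); last by nia.
nia.
Qed.

Definition ss (R : realType) (p : nat) : R := expR (gg p)%:R.
Definition mm (R : realType) (beta : R) (p : nat) : R := p.+1%:R `^ beta * ss R p.
Arguments mm {R}.
Definition MM (R : realType) (beta : R) (p : nat) : R := \prod_(i < p) mm beta i.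

Lemma ss_ge (R : realType) p : (gg p)%:R <= ss R p.
Proof. rewrite /ss; apply: le_trans (expR_ge1Dx _); lra. Qed.

Lemma ss_ge1 (R : realType) p : 1 <= ss R p.
Proof. rewrite /ss; apply: le_trans (expR_ge1Dx _); rewrite lerDl; exact: ler0n. Qed.

Lemma ss_mono (R : realType) p q : (p <= q)%N -> ss R p <= ss R q.
Proof. by move=> pq; rewrite /ss ler_expR ler_nat gg_mono. Qed.

Lemma pow_ge1 (R : realType) (beta : R) p : 0 <= beta -> 1 <= p.+1%:R `^ beta.
Proof.
move=> b0; rewrite -[X in X <= _](powRr0 p.+1%:R).
by apply: (@ler_powR R p.+1%:R) => //; rewrite ler1n.
Qed.

Lemma mm_gt0 (R : realType) (beta : R) p : 0 < mm beta p.
Proof. by rewrite /mm mulr_gt0 ?powR_gt0 ?ltr0n // /ss expR_gt0. Qed.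

Lemma mm_ge1 (R : realType) (beta : R) p : 0 <= beta -> 1 <= mm beta p.
Proof.
move=> b0; rewrite /mm -[X in X <= _]mulr1; apply: ler_pM => //; first exact: pow_ge1.
exact: ss_ge1.
Qed.

Lemma mm_ge_ss (R : realType) (beta : R) p : 0 <= beta -> ss R p <= mm beta p.
Proof.
move=> b0; rewrite /mm -[X in X <= _]mul1r; apply: ler_pM => //.
  by apply: le_trans (ss_ge1 _ p).
exact: pow_ge1.
Qed.

Lemma mm_mono (R : realType) (beta : R) p q : 0 <= beta -> (p <= q)%N -> mm beta p <= mm beta q.
Proof.
move=> b0 pq; rewrite /mm; apply: ler_pM; rewrite ?powR_ge0 ?ss_mono //.
  by apply: le_trans (ss_ge1 _ p).
by apply: ge0_ler_powR; rewrite ?nnegrE ?ler_nat.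
Qed.

Arguments MM {R}.
Lemma MM_gt0 (R : realType) (beta : R) p : 0 < MM beta p.
Proof. by rewrite /MM; apply: prodr_gt0 => i _; exact: mm_gt0. Qed.

Lemma MMS (R : realType) (beta : R) p : MM beta p.+1 = MM beta p * mm beta p.
Proof. by rewrite /MM big_ord_recr. Qed.

Lemma quot_MM (R : realType) (beta : R) p : quot (MM beta) p = mm beta p.
Proof. by rewrite /quot MMS [MM _ _ * _]mulrC mulfK // gt_eqF // MM_gt0. Qed.

Lemma ws (R : realType) (beta : R) : 0 <= beta -> weight_seq (MM beta).
Proof.
move=> b0; split.
- by rewrite /MM big_ord0.
- exact: MM_gt0 _ beta.
- case=> // n _ /=; rewrite !MMS.
  have h1 := MM_gt0 _ beta n; have h2 := mm_gt0 _ beta n; have h3 := mm_gt0 _ beta n.+1.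
  have h4 := @mm_mono _ beta _ _ b0 (leqnSn n).
  nra.
- rewrite (_ : quot (MM beta) = mm beta); last by apply: funext => p; rewrite quot_MM.
  apply/cvgryPge => A; apply: filterS (nbhs_infty_ger A) => n /= hn.
  apply: (le_trans hn); apply: le_trans (mm_ge_ss _ _ _ b0).
  apply: le_trans (ss_ge _ _); rewrite ler_nat; exact: ltnW (gg_gt n).
Qed.

Lemma sm (R : realType) (beta : R) : 0 <= beta -> cond_sm (MM beta).
Proof.
move=> b0; exists (9 * (beta + 1)), 4; split; first lra; split; first lra.
move=> p; rewrite !quot_MM.
have m0 := mm_gt0 _ beta p; have m1 := mm_gt0 _ beta p.+1.
have m0' := mm_ge1 _ _ p b0.
apply: (@le_trans _ _ (ln (mm beta p.+1))).
  rewrite ler_ln ?posrE ?divr_gt0 //.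
  by rewrite ler_pdivrMr // ler_peMr // ltW.
rewrite /mm lnM ?posrE ?powR_gt0 ?ltr0n ?expR_gt0 // ln_powR /ss expRK.
have l1 : ln (p.+2%:R : R) <= (p.+3 * p.+3)%:R.
  apply: le_trans (ltW (ln_sublinear _)) _; first by rewrite ltr0n.
  by rewrite ler_nat; nia.
have l2 : ((gg p.+1)%:R : R) <= (p.+3 * p.+3)%:R.
  by rewrite ler_nat; apply: leq_trans (gg_le _) _; nia.
have l3 : ((p.+3 * p.+3)%:R : R) <= 9 * 4 ^+ p.+1.
  have := nat_poly p; rewrite -(ler_nat R) => h.
  apply: le_trans h _; rewrite natrM natrX.
  by [].
have l4 : 0 <= ((p.+3 * p.+3)%:R : R) by [].
nra.
Qed.

Lemma ndc (R : realType) (beta : R) : 0 <= beta -> ~ cond_dc (MM beta).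
Proof.
move=> b0 [C0 [H [C0p [H1 hyp]]]].
set a := ln C0; set b := ln H.
have bp : 0 < b by rewrite /b ln_gt0.
have [K hK] : exists K : nat, `|a| + b + 2 < K%:R.
  by exists (Num.bound (`|a| + b + 2)); apply: archi_boundP; have := normr_ge0 a; lra.
set n := (2 ^ (2 ^ K))%N.
have Kn : (K <= n)%N by apply: ltnW; apply: leq_trans (ltn_expl K (isT : (1 < 2)%N)) _; rewrite leq_pexp2l // ltnW // ltn_expl.
have n1 : (1 <= n)%N by rewrite expn_gt0.
have := hyp n; rewrite MMS [MM _ _ * _]mulrC ler_pM2r ?MM_gt0 // => hn.
have hs := le_trans (mm_ge_ss _ _ n b0) hn.
have Hp : 0 < H by lra.
have : ln (ss R n) <= ln (C0 * H ^+ n.+1).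
  by rewrite ler_ln ?posrE ?mulr_gt0 ?exprn_gt0 // /ss expR_gt0.
rewrite /ss expRK lnM ?posrE ?exprn_gt0 // lnXn // -/a -/b /gg /n hh_pow -/n.
rewrite natrM -[b *+ _]mulr_natr -natr1.
have : (K%:R : R) <= n%:R by rewrite ler_nat.
have : (1 : R) <= n%:R by rewrite ler1n.
have := ler_norm a.
move: (n%:R : R) => x; move: (K%:R : R) hK => y hK.
have : 0 <= `|a| by [].
move: `|a| hK => c hK c0 ac x1 yx.
have e1 : 0 <= (x - y) * x by apply: mulr_ge0; lra.
have e2 : 0 <= (x - 1) * c by apply: mulr_ge0; lra.
have e3 : 0 <= (y - (c + b + 2)) * x by apply: mulr_ge0; lra.
have e4 : 0 <= (x - 1) * b by apply: mulr_ge0; lra.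
lra.
Qed.

Lemma nmg (R : realType) (beta : R) : 0 <= beta -> ~ cond_mg (MM beta).
Proof.
move=> b0 [C0 [H [C0p [H1 hyp]]]]; apply: (ndc b0).
exists (C0 * MM beta 1), H; split; first by rewrite mulr_gt0 ?MM_gt0.
split => // p; have := hyp p 1%N; rewrite addn1.
suff -> : C0 * MM beta 1 * H ^+ p.+1 * MM beta p = C0 * H ^+ p.+1 * MM beta p * MM beta 1 by [].
by ring.
Qed.

Lemma natpair K' :
  (2 ^ K' * (2 ^ (2 ^ K'.+1)).+1 <= (2 ^ (2 ^ K'.+1 + K'.+1)).+1)%N.
Proof.
rewrite expnD expnS.
have : (0 < 2 ^ 2 ^ K'.+1)%N by rewrite expn_gt0.
move: (2 ^ 2 ^ K'.+1)%N (2 ^ K')%N => P Q; nia.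
Qed.

Lemma not_almost (R : realType) (beta mu : R) : 0 <= beta -> beta < mu ->
  ~ almost_increasing (fun p => quot (MM beta) p / (p.+1%:R `^ mu)).
Proof.
move=> b0 bm [a [a0 hai]].
set d := mu - beta.
have d0 : 0 < d by rewrite /d; lra.
have l2 : 0 < ln (2 : R) by rewrite ln_gt0 // ltr1n.
have [K' hK] : exists K' : nat, a / (d * ln 2) < K'%:R.
  exists (Num.bound (a / (d * ln 2))); apply: archi_boundP.
  by rewrite divr_ge0 // ?mulr_ge0 // ltW.
rewrite ltr_pdivrMr ?mulr_gt0 // in hK.
set K := K'.+1.
set p := (2 ^ (2 ^ K))%N; set q := (2 ^ (2 ^ K + K))%N.
have pq : (p <= q)%N by rewrite leq_pexp2l // leq_addr.
have := hai p q pq; rewrite !quot_MM /mm.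
have sE : ss R q = ss R p by rewrite /ss /gg /p /q hh_pow hh_flat.
rewrite sE.
set x : R := p.+1%:R; set y : R := q.+1%:R; set s := ss R p.
have x0 : 0 < x by rewrite ltr0n.
have y0 : 0 < y by rewrite ltr0n.
have s0 : 0 < s by rewrite /s /ss expR_gt0.
have xmu : x `^ mu = x `^ beta * x `^ d.
  rewrite -powRD; last by rewrite (gt_eqF x0) implybT.
  by rewrite /d addrC subrK.
have ymu : y `^ mu = y `^ beta * y `^ d.
  rewrite -powRD; last by rewrite (gt_eqF y0) implybT.
  by rewrite /d addrC subrK.
have xb := powR_gt0 beta x0; have yb := powR_gt0 beta y0.
have xd := powR_gt0 d x0; have yd := powR_gt0 d y0.
rewrite mulrA ler_pdivrMr ?powR_gt0 // mulrAC ler_pdivlMr ?powR_gt0 //.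
rewrite xmu ymu => h.
have h2 : y `^ d <= a * x `^ d.
  have P0 : 0 < x `^ beta * y `^ beta * s by rewrite !mulr_gt0.
  rewrite -(ler_pM2l P0).
  suff <- : x `^ beta * s * (y `^ beta * y `^ d) = x `^ beta * y `^ beta * s * y `^ d.
    suff <- : a * (y `^ beta * s) * (x `^ beta * x `^ d) = x `^ beta * y `^ beta * s * (a * x `^ d) by [].
    by ring.
  by ring.
have h3 : (2 ^ K')%:R * x <= y.
  by rewrite /x /y -natrM ler_nat natpair.
have h4 : ((2 ^ K')%:R) `^ d * x `^ d <= y `^ d.
  rewrite -powRM ?ler0n ?(ltW x0) //.
  apply: (ge0_ler_powR (ltW d0)) => //; rewrite nnegrE ?mulr_ge0 ?ler0n //.
have h5 : ((2 ^ K')%:R : R) `^ d <= a.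
  by have := le_trans h4 h2; rewrite ler_pM2r.
have h6 : 1 + d * (K'%:R * ln 2) <= ((2 ^ K')%:R : R) `^ d.
  rewrite /powR ifF; last by rewrite pnatr_eq0 expn_eq0.
  apply: le_trans (expR_ge1Dx _); rewrite natrX lnXn //.
  rewrite -[ln (2:R) *+ K']mulr_natr.
  by rewrite [ln _ * _]mulrC.
lra.
Qed.

Lemma gam (R : realType) (beta : R) : 0 <= beta -> gamma (MM beta) = (beta%:E)%E.
Proof.
move=> b0; apply/le_anti/andP; split.
- apply: ge_ereal_sup => y [->|[mu [mu0 hai] <-]]; first by rewrite lee_fin.
  rewrite lee_fin leNgt; apply/negP => bm.
  exact: (@not_almost R beta mu b0 bm hai).
- case: (eqVneq beta 0) => [->|bne].
    by apply: ereal_sup_ubound; left.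
  have bp : 0 < beta by rewrite lt_neqAle eq_sym bne b0.
  apply: ereal_sup_ubound; right; exists beta => //; split => //.
  exists 1; split => // p q pq; rewrite mul1r !quot_MM /mm.
  rewrite ![_ `^ beta * _]mulrC !mulfK ?gt_eqF ?powR_gt0 ?ltr0n //.
  exact: ss_mono.
Qed.

Unset Implicit Arguments.

Theorem corollary4p12 (R : realType) (beta : R) :
  0 <= beta ->
  exists M : nat -> R,
    [/\ weight_seq M,
        cond_sm M,
        ~ cond_dc M,
        ~ cond_mg M &
        gamma M = (beta%:E)%E].
Proof.
move=> b0; exists (MM beta); split.
- exact: ws.
- exact: sm.
- exact: ndc.
- exact: nmg.
- exact: gam.
Qed.
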